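(* Let $\varepsilon>0$ be fixed, $d$ a sufficiently large constant (depending on $\varepsilon$) and $q\ge(2+\varepsilon)d$. For integers $n\ge d$ and $L\ge1$, let $X\sim\mathrm{Bin}(n,d/n)$ and let $X_1,X_2,\dots$ be independent random variables where, for $i\le L$, $X_i$ is distributed as $X$, and for $i>L$, $X_i$ is distributed as $X\cdot\mathbf{1}[X\ge(q-5)/2]$. Let $Y_0=L$ and $Y_i=Y_{i-1}+X_i-1$ for $i\ge1$. Then there exist constants $C_1,C_2>0$ depending only on $d$ and $\varepsilon$ such that for all $n$, $L$ and $t\ge0$, $$\Pr[Y_t\ge0]\le\exp(-C_1t+C_2L).$$ *)

(* Defs.v *)
From Stdlib Require Import Reals ZArith Arith.
Open Scope R_scope.

Definition binom_pmf (n : nat) (p : R) (k : nat) : R :=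
  C n k * p ^ k * (1 - p) ^ (n - k).

Definition Xval (q L i x : nat) : nat :=
  if (i <=? L)%nat then x
  else if Rle_dec ((INR q - 5) / 2) (INR x) then x else 0%nat.

(* pr_walk n p q L k i y = Pr[ y + sum_{j=i}^{i+k-1} (X_j - 1) >= 0 ],
   the X_j independent, X_j = Xval q L j B_j with B_j ~ Bin(n,p) i.i.d.
   (the exact finite expectation over the product of discrete laws). *)
Fixpoint pr_walk (n : nat) (p : R) (q L : nat) (k i : nat) (y : Z) : R :=
  match k with
  | O => if (0 <=? y)%Z then 1 else 0
  | S k' => sum_f_R0 (fun x => binom_pmf n p x *
              pr_walk n p q L k' (S i) (y + Z.of_nat (Xval q L i x) - 1)%Z) n
  end.

Definition prob_Yt_nonneg (n : nat) (d : R) (q L t : nat) : R :=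
  pr_walk n (d / INR n) q L t 1 (Z.of_nat L).

(* Main.v *)
Require Import Defs.
From Stdlib Require Import Reals ZArith Arith Lra Lia.
Open Scope R_scope.

Lemma exp_le' a b : a <= b -> exp a <= exp b.
Proof. intros [H|H]. left; now apply exp_increasing. right; now subst. Qed.

Lemma pow_ge1 K m : 1 <= K -> 1 <= K ^ m.
Proof. intros HK; induction m; simpl; nra. Qed.

Lemma C_nonneg n k : 0 <= C n k.
Proof.
  unfold C. apply Rmult_le_pos. apply pos_INR.
  left; apply Rinv_0_lt_compat, Rmult_lt_0_compat; apply INR_fact_lt_0.
Qed.

Lemma pmf_nonneg n p k : 0 <= p <= 1 -> 0 <= binom_pmf n p k.
Proof.
  intros Hp; unfold binom_pmf.
  apply Rmult_le_pos; [apply Rmult_le_pos|]; try apply pow_le; try lra.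
  apply C_nonneg.
Qed.

Lemma exp_mul_INR a k : exp (a * INR k) = exp a ^ k.
Proof.
  induction k. simpl; rewrite Rmult_0_r; apply exp_0.
  rewrite S_INR; simpl. rewrite <- IHk, <- exp_plus. f_equal; ring.
Qed.

Lemma mgf n p a :
  sum_f_R0 (fun x => binom_pmf n p x * exp (a * INR x)) n = (p * exp a + (1 - p)) ^ n.
Proof.
  rewrite binomial. apply sum_eq; intros i _.
  unfold binom_pmf. rewrite exp_mul_INR, Rpow_mult_distr. ring.
Qed.

Lemma mgf_bound n p a d : 0 <= p <= 1 -> INR n * p = d ->
  (p * exp a + (1 - p)) ^ n <= exp (d * (exp a - 1)).
Proof.
  intros Hp Hd.
  assert (H1 : p * exp a + (1 - p) <= exp (p * (exp a - 1))).
  { pose proof (exp_ineq1_le (p * (exp a - 1))). lra. }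
  assert (H0 : 0 <= p * exp a + (1 - p)).
  { pose proof (exp_pos a). nra. }
  eapply Rle_trans. apply pow_incr. split; eassumption.
  rewrite <- exp_mul_INR. apply exp_le'. rewrite <- Hd. lra.
Qed.

Definition Ssum n p q L lam i :=
  sum_f_R0 (fun x => binom_pmf n p x * exp (lam * (INR (Xval q L i x) - 1))) n.

Lemma walk_bound n p q L lam Bv K :
  0 <= p <= 1 -> 0 <= lam -> 0 <= Bv -> 1 <= K ->
  (forall i, (i <= L)%nat -> Ssum n p q L lam i <= Bv * K) ->
  (forall i, (L < i)%nat -> Ssum n p q L lam i <= Bv) ->
  forall k i y, pr_walk n p q L k i y <= exp (lam * IZR y) * Bv ^ k * K ^ (L + 1 - i).
Proof.
  intros Hp Hl HB HK HA HBi k. induction k; intros i y; simpl.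
  - pose proof (pow_ge1 K (L+1-i) HK).
    destruct (0 <=? y)%Z eqn:E.
    + apply Z.leb_le in E. apply IZR_le in E.
      pose proof (exp_ineq1_le (lam * IZR y)).
      assert (0 <= lam * IZR y) by (apply Rmult_le_pos; lra).
      set (e := exp (lam * IZR y)) in *. set (kk := K ^ (L + 1 - i)) in *.
      replace (e * 1 * kk) with (e * kk) by ring.
      apply Rle_trans with (1 * 1). lra. apply Rmult_le_compat; lra.
    + pose proof (exp_pos (lam * IZR y)).
      apply Rmult_le_pos; [|lra]. simpl; lra.
  - set (c := exp (lam * IZR y) * Bv ^ k * K ^ (L + 1 - S i)).
    apply Rle_trans with (c * Ssum n p q L lam i).
    + unfold Ssum. rewrite scal_sum. apply sum_Rle; intros x _.
      pose proof (pmf_nonneg n p x Hp).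
      eapply Rle_trans. apply Rmult_le_compat_l. exact H. apply IHk.
      unfold c. rewrite minus_IZR, plus_IZR, <- INR_IZR_INZ.
      replace (lam * (IZR y + INR (Xval q L i x) - IZR 1)) with
        (lam * IZR y + lam * (INR (Xval q L i x) - 1)) by (simpl; ring).
      rewrite exp_plus. right; ring.
    + assert (Hc : 0 <= exp (lam * IZR y) * Bv ^ k).
      { pose proof (exp_pos (lam * IZR y)). pose proof (pow_le Bv k HB). nra. }
      unfold c. destruct (le_lt_dec i L) as [Hi|Hi].
      * replace (L + 1 - i)%nat with (S (L + 1 - S i)) by lia.
        pose proof (HA i Hi). pose proof (pow_ge1 K (L + 1 - S i) HK).
        simpl. rewrite (Rmult_comm Bv (Bv ^ k)).
        apply Rle_trans with (exp (lam * IZR y) * Bv ^ k * K ^ (L + 1 - S i) * (Bv * K)).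
        apply Rmult_le_compat_l; [|assumption]. nra. right; ring.
      * replace (L + 1 - i)%nat with 0%nat by lia.
        replace (L + 1 - S i)%nat with 0%nat by lia.
        pose proof (HBi i Hi). simpl. rewrite (Rmult_comm Bv (Bv ^ k)).
        nra.
Qed.

Lemma sum_pmf n p : sum_f_R0 (fun x => binom_pmf n p x) n = 1.
Proof.
  transitivity (sum_f_R0 (fun x => binom_pmf n p x * exp (0 * INR x)) n).
  apply sum_eq; intros i _. rewrite Rmult_0_l, exp_0; ring.
  rewrite mgf, exp_0. replace (p * 1 + (1 - p)) with 1 by ring. apply pow1.
Qed.

Lemma sumA n p q L lam d i : 0 <= p <= 1 -> INR n * p = d -> 0 <= lam -> (i <= L)%nat ->
  Ssum n p q L lam i <= exp (d * (exp lam - 1)).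
Proof.
  intros Hp Hd Hl Hi. unfold Ssum.
  apply Rle_trans with (sum_f_R0 (fun x => binom_pmf n p x * exp (lam * INR x)) n).
  - apply sum_Rle; intros x _. unfold Xval.
    replace (i <=? L)%nat with true by (symmetry; apply Nat.leb_le; lia).
    apply Rmult_le_compat_l. apply pmf_nonneg; auto. apply exp_le'. nra.
  - rewrite mgf. apply mgf_bound; auto.
Qed.

Lemma sumB n p q L lam mu d i : 0 <= p <= 1 -> INR n * p = d -> 0 <= lam <= mu -> (L < i)%nat ->
  Ssum n p q L lam i <=
  exp (- lam) + exp (- lam - (mu - lam) * ((INR q - 5) / 2)) * exp (d * (exp mu - 1)).
Proof.
  intros Hp Hd Hl Hi. unfold Ssum.
  set (thr := (INR q - 5) / 2).
  set (c := exp (- lam - (mu - lam) * thr)).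
  apply Rle_trans with (sum_f_R0 (fun x => binom_pmf n p x * exp (- lam) +
                     binom_pmf n p x * exp (mu * INR x) * c) n).
  - apply sum_Rle; intros x _. pose proof (pmf_nonneg n p x Hp).
    assert (Hc : 0 <= binom_pmf n p x * exp (mu * INR x) * c).
    { unfold c. pose proof (exp_pos (mu * INR x)). pose proof (exp_pos (- lam - (mu - lam) * thr)).
      apply Rmult_le_pos; [apply Rmult_le_pos|]; lra. }
    unfold Xval.
    replace (i <=? L)%nat with false by (symmetry; apply Nat.leb_gt; lia).
    destruct (Rle_dec ((INR q - 5) / 2) (INR x)) as [Hx|Hx]; fold thr in Hx.
    + assert (exp (lam * (INR x - 1)) <= exp (mu * INR x) * c).
      { unfold c. rewrite <- exp_plus. apply exp_le'. nra. }
      pose proof (exp_pos (- lam)).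
      assert (0 <= binom_pmf n p x * exp (- lam)) by (apply Rmult_le_pos; lra).
      assert (binom_pmf n p x * exp (lam * (INR x - 1)) <= binom_pmf n p x * (exp (mu * INR x) * c))
        by (apply Rmult_le_compat_l; lra).
      rewrite <- Rmult_assoc in H3. lra.
    + simpl INR. replace (lam * (0 - 1)) with (- lam) by ring. lra.
  - rewrite plus_sum, <- !scal_sum, sum_pmf, mgf.
    pose proof (mgf_bound n p mu d Hp Hd).
    assert (0 < c) by (unfold c; apply exp_pos). nra.
Qed.

Theorem mainTheorem16 :
  forall eps : R, eps > 0 ->
  exists d0 : R, forall d : R, d >= d0 ->
  exists C1 C2 : R, C1 > 0 /\ C2 > 0 /\
  forall q : nat, INR q >= (2 + eps) * d ->
  forall n L t : nat, INR n >= d -> (L >= 1)%nat ->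
    prob_Yt_nonneg n d q L t <= exp (- C1 * INR t + C2 * INR L).
Proof.
  intros eps Heps.
  set (dl := Rmin eps 1 / 2).
  assert (Hdl : 0 < dl <= 1/2 /\ 2 * dl <= eps).
  { unfold dl. pose proof (Rmin_l eps 1). pose proof (Rmin_r eps 1).
    assert (0 < Rmin eps 1) by (apply Rmin_glb_lt; lra). lra. }
  assert (Hd4 : 0 < dl ^ 4) by (apply pow_lt; lra).
  exists (512 / dl ^ 4 + 1). intros d Hd.
  assert (Hdd4 : d * dl ^ 4 > 512).
  { assert (512 / dl ^ 4 * dl ^ 4 = 512) by (field; lra).
    assert (0 < 512 / dl ^ 4) by (apply Rdiv_lt_0_compat; lra). nra. }
  assert (Hdpos : d > 0).
  { assert (0 < 512 / dl ^ 4) by (apply Rdiv_lt_0_compat; lra). lra. }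
  set (lam := dl ^ 2 / 32). set (mu := dl / 4).
  set (Bv := exp (- lam) * (1 + exp (1 - d * dl ^ 2 / 16))).
  set (A := exp (d * (exp lam - 1))).
  assert (Hlam : 0 < lam) by (unfold lam; nra).
  assert (HBpos : 0 < Bv).
  { unfold Bv. pose proof (exp_pos (-lam)). pose proof (exp_pos (1 - d * dl ^ 2 / 16)). nra. }
  assert (HB1 : Bv < 1).
  { set (w := d * dl ^ 2 / 16 - 1).
    assert (Hw : 1 + w = d * dl ^ 2 / 16) by (unfold w; ring).
    set (E := exp w).
    assert (HE : 1 + w <= E) by apply exp_ineq1_le.
    assert (HEl : E * lam > 1).
    { assert ((1 + w) * lam = d * dl ^ 4 / 512) by (unfold w, lam; field).
      assert (0 < 1 + w) by (rewrite Hw; nra). nra. }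
    assert (Hinv : exp (1 - d * dl ^ 2 / 16) < lam).
    { replace (1 - d * dl ^ 2 / 16) with (- w) by (unfold w; ring).
      rewrite exp_Ropp. fold E. assert (0 < E) by apply exp_pos.
      apply Rmult_lt_reg_l with E; auto. rewrite Rinv_r by lra. lra. }
    pose proof (exp_ineq1_le lam).
    assert (Hl2 : exp (- lam) * exp lam = 1) by (rewrite <- exp_plus; replace (-lam + lam) with 0 by ring; apply exp_0).
    unfold Bv. pose proof (exp_pos (- lam)). nra. }
  assert (HA1 : 1 <= A).
  { unfold A. pose proof (exp_ineq1_le lam).
    pose proof (exp_ineq1_le (d * (exp lam - 1))). nra. }
  set (K := A / Bv).
  assert (HBK : Bv * K = A) by (unfold K; field; lra).
  assert (HK1 : 1 < K).
  { apply Rmult_lt_reg_l with Bv; auto. rewrite HBK. lra. }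
  exists (- ln Bv), (lam + ln K).
  assert (HlnB : ln Bv < 0) by (rewrite <- ln_1; apply ln_increasing; lra).
  assert (HlnK : 0 < ln K) by (rewrite <- ln_1; apply ln_increasing; lra).
  split; [lra|]. split; [lra|].
  intros q Hq n L t Hn HL.
  unfold prob_Yt_nonneg. set (p := d / INR n).
  assert (Hnp : INR n * p = d) by (unfold p; field; lra).
  assert (Hp : 0 <= p <= 1).
  { assert (0 < p) by (unfold p; apply Rdiv_lt_0_compat; lra). nra. }
  assert (Hthr : (INR q - 5) / 2 >= (1 + dl) * d - 5 / 2) by nra.
  eapply Rle_trans.
  apply (walk_bound n p q L lam Bv K Hp ltac:(lra) ltac:(lra) ltac:(lra)).
  - intros i Hi. rewrite HBK. apply sumA; auto; lra.
  - intros i Hi. eapply Rle_trans. apply (sumB n p q L lam mu d i Hp Hnp); auto.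
    split. lra. unfold lam, mu. nra.
    assert (Hmu : exp mu <= 1 + mu + 2 * mu ^ 2).
    { pose proof (exp_ineq1_le (- mu)). rewrite exp_Ropp in H.
      pose proof (exp_pos mu).
      assert (Hm : exp mu * (1 - mu) <= 1).
      { assert (exp mu * / exp mu = 1) by (apply Rinv_r; lra). nra. }
      assert (0 < 1 - mu) by (unfold mu; lra).
      assert ((1 + mu + 2 * mu ^ 2) * (1 - mu) >= 1) by (unfold mu; nra).
      nra. }
    assert (Hexp : d * (exp mu - 1) - (mu - lam) * ((INR q - 5) / 2) <= 1 - d * dl ^ 2 / 16).
    { assert (Hml : 0 <= mu - lam) by (unfold mu, lam; nra).
      assert (d * (exp mu - 1) <= d * (mu + 2 * mu ^ 2)) by nra.
      assert ((mu - lam) * ((INR q - 5) / 2) >= (mu - lam) * ((1 + dl) * d - 5 / 2)) by nra.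
      assert (d * dl ^ 2 * (1 - dl) >= 0).
      { assert (0 <= d * dl ^ 2) by nra. nra. }
      unfold mu, lam in *. nra. }
    unfold Bv.
    replace (- lam - (mu - lam) * ((INR q - 5) / 2)) with (- lam + - ((mu - lam) * ((INR q - 5) / 2))) by ring.
    rewrite exp_plus, Rmult_assoc, <- exp_plus.
    pose proof (exp_le' _ _ Hexp). pose proof (exp_pos (- lam)).
    replace (- ((mu - lam) * ((INR q - 5) / 2)) + d * (exp mu - 1)) with
      (d * (exp mu - 1) - (mu - lam) * ((INR q - 5) / 2)) by ring.
    nra.
  - replace (L + 1 - 1)%nat with L by lia.
    rewrite <- INR_IZR_INZ.
    assert (E1 : Bv ^ t = exp (ln Bv * INR t)) by (rewrite exp_mul_INR, exp_ln; auto).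
    assert (E2 : K ^ L = exp (ln K * INR L)) by (rewrite exp_mul_INR, exp_ln; lra).
    rewrite E1, E2, <- !exp_plus. right; f_equal; ring.
Qed.
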